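(* Let $\mu$ be a Borel probability measure on the metric space $(X,d)$ and $k\geq2$ an integer. Then \[(k-1)\underline{D}_k(\mu)=\liminf_{r\to0}\frac{\log\int_{X^k}\prod_{j=1}^{k-1}\prod_{l=j+1}^k\mathbbm{1}_{B(x_j,r)}(x_l)\,d\mu^k(x_1,\dots,x_k)}{\log r}\] and \[(k-1)\overline{D}_k(\mu)=\limsup_{r\to0}\frac{\log\int_{X^k}\prod_{j=1}^{k-1}\prod_{l=j+1}^k\mathbbm{1}_{B(x_j,r)}(x_l)\,d\mu^k(x_1,\dots,x_k)}{\log r}.\]
   Context: $(X,d)$ is a finite dimensional metric space (standing assumption of the paper); $B(x,r)$ is the open ball, $\mu^k$ the product measure. $\underline{D}_k(\mu)=\liminf_{r\to0}\frac{\log\int_X\mu(B(x,r))^{k-1}d\mu(x)}{(k-1)\log r}$ and $\overline{D}_k(\mu)$ is the same with $\limsup$. *)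

(* Defs.v *)
From HB Require Import structures.
From mathcomp Require Import all_boot all_order all_algebra.
From mathcomp Require Import all_classical all_reals all_analysis.

Set Implicit Arguments.
Unset Strict Implicit.
Unset Printing Implicit Defensive.

Import Order.TTheory GRing.Theory Num.Theory.
Import numFieldNormedType.Exports.

Local Open Scope classical_set_scope.
Local Open Scope ring_scope.

Section metric_defs.
Variables (R : realType) (X : Type) (d : X -> X -> R).

Definition is_metric : Prop :=
  [/\ forall x y, 0 <= d x y,
      forall x y, d x y = 0 <-> x = y,
      forall x y, d x y = d y x &
      forall x y z, d x z <= d x y + d y z].

Definition oball (x : X) (r : R) : set X := [set y | d x y < r].

Definition metric_open (A : set X) : Prop :=
  forall x, A x -> exists2 r : R, 0 < r & oball x r `<=` A.

Definition finite_dimensional : Prop :=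
  exists N : nat, forall (x : X) (r : R), 0 < r ->
    exists c : 'I_N -> X,
      oball x (2 * r) `<=` \bigcup_(i in [set: 'I_N]) oball (c i) r.
End metric_defs.

Section product_power.
Local Open Scope ereal_scope.
Variables (R : realType) (disp : measure_display) (X : measurableType disp).
Variable mu : set X -> \bar R.

(** The k-fold product measure mu^k on X^k (= k.-tuple X), built
    iteratively as mu^(n+1) = mu \x mu^n via sections, exactly as the
    library's product measure [m1 \x m2] := fun A => \int[m1]_x m2 (xsection A x),
    with X * X^n identified with X^(n+1) through (x, t) |-> x :: t. *)
Fixpoint prod_pow (n : nat) : set (n.-tuple X) -> \bar R :=
  match n return set (n.-tuple X) -> \bar R with
  | 0 => fun A => ((\1_A (nil_tuple X) : R))%:E
  | S m => fun A => \int[mu]_x @prod_pow m [set t | A (cons_tuple x t)]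
  end.
End product_power.
Arguments prod_pow {R disp X} mu n.

Section correlation_dimensions.
Local Open Scope ereal_scope.
Variables (R : realType) (disp : measure_display) (X : measurableType disp).
Variables (d : X -> X -> R) (mu : set X -> \bar R).

Definition corr_integral (k : nat) (r : R) : \bar R :=
  \int[mu]_x ((fine (mu (oball d x r)) ^+ k.-1)%R)%:E.

Definition Dk_ratio (k : nat) (r : R) : \bar R :=
  ((ln (fine (corr_integral k r)) / ((k.-1)%:R * ln r))%R)%:E.

Definition lower_Dk (k : nat) : \bar R := limf_einf (Dk_ratio k) (0%R)^'+.
Definition upper_Dk (k : nat) : \bar R := limf_esup (Dk_ratio k) (0%R)^'+.

Definition chain_integral (k : nat) (r : R) : \bar R :=
  \int[prod_pow mu k]_x
    ((\prod_(j < k) \prod_(l < k | (j < l)%N)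
        \1_(oball d (tnth x j) r) (tnth x l) : R))%:E.

Definition chain_ratio (k : nat) (r : R) : \bar R :=
  ((ln (fine (chain_integral k r)) / ln r)%R)%:E.
End correlation_dimensions.

(* Main.v *)
Require Import Defs.
From HB Require Import structures.
From mathcomp Require Import all_boot all_order all_algebra.
From mathcomp Require Import all_classical all_reals all_analysis.
From mathcomp Require Import lra.

Import Order.TTheory GRing.Theory Num.Theory.
Import numFieldNormedType.Exports.
Import HBNNSimple.
Local Open Scope classical_set_scope.
Local Open Scope ring_scope.


Section limits.
Variable R : realType.

Lemma at_right0P (P : set R) :
  (0%R)^'+ P <-> exists2 e : R, 0 < e & forall y, 0 < y < e -> P y.
Proof.
split.
  move=> /nbhs_ballP [e /= e0 H]; exists e => // y /andP[y0 ye].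
  apply: H => //; rewrite /ball /= sub0r normrN ger0_norm ?ltW//.
move=> [e e0 H]; apply/nbhs_ballP; exists e => //= y.
rewrite /ball /= sub0r normrN => ye y0; apply: H; rewrite y0 /=.
by rewrite (le_lt_trans _ ye)// ler_norm.
Qed.

Local Open Scope ereal_scope.

Lemma limf_einf_le (f g : R -> \bar R) :
  (exists2 e : R, (0 < e)%R & forall y, (0 < y < e)%R -> f y <= g y) ->
  limf_einf f (0%R)^'+ <= limf_einf g (0%R)^'+.
Proof.
move=> [e e0 H]; rewrite !limf_einfE; apply: ge_ereal_sup => _ [V FV <-].
have FW : (0%R)^'+ (V `&` [set y | (0 < y < e)%R]).
  apply: filterI => //; apply/at_right0P; exists e => //.
apply: (@le_trans _ _ (ereal_inf (g @` (V `&` [set y | (0 < y < e)%R])))).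
  apply: (@le_trans _ _ (ereal_inf (f @` (V `&` [set y | (0 < y < e)%R])))).
    by apply: ereal_inf_le_tmp => _ [y [Vy _] <-]; exists y.
  apply: le_ereal_inf_tmp => _ [y [Vy Wy] <-].
  apply: (le_trans _ (H _ Wy)); apply: ereal_inf_lbound; exists y => //.
by apply: ereal_sup_ubound; exists (V `&` [set y | (0 < y < e)%R]).
Qed.

Lemma limf_esup_le (f g : R -> \bar R) :
  (exists2 e : R, (0 < e)%R & forall y, (0 < y < e)%R -> f y <= g y) ->
  limf_esup f (0%R)^'+ <= limf_esup g (0%R)^'+.
Proof.
move=> [e e0 H]; rewrite !limf_esupE; apply: le_ereal_inf_tmp => _ [V FV <-].
have FW : (0%R)^'+ (V `&` [set y | (0 < y < e)%R]).
  apply: filterI => //; apply/at_right0P; exists e => //.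
apply: (@le_trans _ _ (ereal_sup (f @` (V `&` [set y | (0 < y < e)%R])))).
  by apply: ereal_inf_lbound; exists (V `&` [set y | (0 < y < e)%R]).
apply: (@le_trans _ _ (ereal_sup (g @` (V `&` [set y | (0 < y < e)%R])))).
  apply: ge_ereal_sup => _ [y [Vy Wy] <-].
  apply: (le_trans (H _ Wy)); apply: ereal_sup_ubound; exists y => //.
by apply: ereal_sup_le => _ [y [Vy _] <-]; exists y.
Qed.

Lemma limf_einf_half (f : R -> \bar R) :
  limf_einf (fun r : R => f (r / 2)%R) (0%R)^'+ <= limf_einf f (0%R)^'+.
Proof.
rewrite !limf_einfE; apply: ge_ereal_sup => _ [V FV <-].
have FW : (0%R)^'+ [set y | V (y * 2)%R].
  move/at_right0P : FV => [e e0 H]; apply/at_right0P; exists (e / 2)%R.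
    by rewrite divr_gt0.
  move=> y /andP[y0 ye]; apply: H; rewrite mulr_gt0//=.
  by rewrite -ltr_pdivlMr.
apply: (@le_trans _ _ (ereal_inf (f @` [set y | V (y * 2)%R]))).
  apply: ereal_inf_le_tmp => _ [y Vy <-]; exists (y * 2)%R => //.
  by rewrite mulfK.
by apply: ereal_sup_ubound; exists [set y | V (y * 2)%R].
Qed.

Lemma limf_esup_half (f : R -> \bar R) :
  limf_esup (fun r : R => f (r / 2)%R) (0%R)^'+ <= limf_esup f (0%R)^'+.
Proof.
rewrite !limf_esupE; apply: le_ereal_inf_tmp => _ [V FV <-].
have FW : (0%R)^'+ [set y | V (y / 2)%R].
  move/at_right0P : FV => [e e0 H]; apply/at_right0P; exists (e * 2)%R.
    by rewrite mulr_gt0.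
  move=> y /andP[y0 ye]; apply: H; rewrite divr_gt0//=.
  by rewrite ltr_pdivrMr.
apply: (@le_trans _ _ (ereal_sup ((fun r : R => f (r / 2)%R) @` [set y | V (y / 2)%R]))).
  by apply: ereal_inf_lbound; exists [set y | V (y / 2)%R].
by apply: ereal_sup_le => _ [y Vy <-]; exists (y / 2)%R.
Qed.

Lemma limf_einfZ (c : R) (f : R -> \bar R) : (0 < c)%R ->
  limf_einf (fun r : R => c%:E * f r) (0%R)^'+ = c%:E * limf_einf f (0%R)^'+.
Proof.
move=> c0; rewrite !limf_einfE -ereal_sup_pZl//; congr ereal_sup.
have E V : ereal_inf [set c%:E * f r | r in V] = c%:E * ereal_inf (f @` V).
  by rewrite -ereal_inf_pZl// image_comp.
apply/seteqP; split => _ [V FV <-].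
  exists (ereal_inf (f @` V)); first by exists V.
  by rewrite E.
case: FV => W FW <-; exists W => //; by rewrite E.
Qed.

Lemma limf_esupZ (c : R) (f : R -> \bar R) : (0 < c)%R ->
  limf_esup (fun r : R => c%:E * f r) (0%R)^'+ = c%:E * limf_esup f (0%R)^'+.
Proof.
move=> c0; rewrite !limf_esupE -ereal_inf_pZl//; congr ereal_inf.
have E V : ereal_sup [set c%:E * f r | r in V] = c%:E * ereal_sup (f @` V).
  by rewrite -ereal_sup_pZl// image_comp.
apply/seteqP; split => _ [V FV <-].
  exists (ereal_sup (f @` V)); first by exists V.
  by rewrite E.
case: FV => W FW <-; exists W => //; by rewrite E.
Qed.

End limits.

Section gen_integral.
Local Open Scope ereal_scope.
Context d (T : measurableType d) (R : realType).
Variable m : set T -> \bar R.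
Hypothesis m0 : m set0 = 0.

Lemma sintegral0_gen : sintegral m (cst 0%R) = 0.
Proof.
rewrite /sintegral fsbig1// => r _; rewrite preimage_cst.
case: ifPn => [/[!inE] <-|]; first by rewrite mul0e.
by move=> _; rewrite m0 mule0.
Qed.

Lemma integral_gen (f : T -> \bar R) : (forall x, 0 <= f x) ->
  integral m setT f = ereal_sup [set sintegral m h |
      h in [set h : {nnsfun T >-> R} | forall x, (h x)%:E <= f x]].
Proof.
move=> f0; rewrite /integral patch_setT.
have -> : f^\+ = f by apply/funext => x; rewrite (ge0_funeposE (D := setT))// ?inE.
have -> : f^\- = cst 0 by apply/funext => x; rewrite (ge0_funenegE (D := setT))// ?inE.
suff -> : ereal_sup [set sintegral m h | h in
    [set h : {nnsfun T >-> R} | forall x, (h x)%:E <= cst 0 x]] = 0.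
  by rewrite sube0.
rewrite [X in ereal_sup X](_ : _ = [set 0]) ?ereal_sup1//.
apply/seteqP; split => [_ [h /= h0 <-]|_ ->] /=.
  have h0' : forall x, h x = 0%R.
    by move=> x; apply/eqP; rewrite eq_le -2!lee_fin h0 //= lee_fin.
  by rewrite (eq_sintegral (cst 0%R)) ?sintegral0_gen.
by exists nnsfun0 => //; rewrite sintegral0_gen.
Qed.

Lemma sintegral_indic_gen (A : set T) : sintegral m \1_A = m A.
Proof.
rewrite /sintegral -(fsbig_widen [set 0%R; 1%R]) => //=; last first.
  move=> t [_ /= /not_orP[t0 t1]]; rewrite preimage10 ?m0 ?mule0//.
  move=> [x _]; rewrite indicE; case: (_ \in _) => /= tE.
    by apply: t1.
  by apply: t0.
have N01 : (0 <> 1:> R)%R by apply/eqP; rewrite eq_sym oner_eq0.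
rewrite fsbigU//=; last by move=> t [->].
rewrite !fsbig_set1 mul0e add0e mul1e.
by rewrite preimage_indic ifT ?inE// ifN ?notin_setE.
Qed.

Hypothesis m_ge0 : forall A, 0 <= m A.
Hypothesis m_mono : forall A B, A `<=` B -> m A <= m B.
Hypothesis m_sadd : forall A B, A `&` B = set0 -> m A + m B <= m (A `|` B).

Lemma sintegral_le_gen (g : {nnsfun T >-> R}) (S : set T) :
  (forall t, (g t <= \1_S t)%R) -> sintegral m g <= m S.
Proof.
move=> gS.
rewrite /sintegral -(fsbig_widen (range g) setT) //; last first.
  by move=> t [_ /= Nt]; rewrite preimage10 ?m0 ?mule0.
rewrite fsbig_finite; last exact: fimfunP.
set ys := finmap.enum_fset _.
have : uniq ys by exact: finmap.fset_uniq.
suff H : forall ys : seq R, uniq ys ->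
  \sum_(y <- ys) y%:E * m (g @^-1` [set y]) <= m (S `&` [set t | g t \in ys]).
  move=> /H /le_trans; apply; apply: m_mono; exact: subIsetl.
elim => [|y zs IH]; first by rewrite big_nil.
rewrite /= => /andP[yzs uzs]; rewrite big_cons.
apply: (@le_trans _ _ (m (S `&` g @^-1` [set y]) + m (S `&` [set t | g t \in zs]))).
  apply: leeD; last exact: IH.
  have [[t gty]|] := pselect (exists t, g t = y); last first.
    move=> Ng; rewrite preimage10 ?m0 ?mule0//.
    by move=> [t _ gt]; apply: Ng; exists t.
  have y0 : (0 <= y)%R by rewrite -gty fun_ge0.
  have [y00|ypos] := eqVneq y 0%R; first by rewrite y00 mul0e.
  have ypos' : (0 < y)%R by rewrite lt_neqAle eq_sym ypos.
  have sub : g @^-1` [set y] `<=` S `&` g @^-1` [set y].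
    move=> u /= guy; split => //.
    have := gS u; rewrite guy indicE; case: (u \in S) /boolP => [/set_mem //|_].
    by rewrite /= => yle; move: ypos'; rewrite ltNge yle.
  apply: (@le_trans _ _ (m (g @^-1` [set y]))); last exact: m_mono.
  apply: gee_pMl => //.
  rewrite lee_fin -gty (le_trans (gS t))// indicE; by case: (_ \in _).
have disj : (S `&` g @^-1` [set y]) `&` (S `&` [set t | g t \in zs]) = set0.
  apply/seteqP; split => // u [[_ /= guy] [_ /= guz]].
  by move: yzs; rewrite -guy guz.
apply: (@le_trans _ _ (m ((S `&` g @^-1` [set y]) `|` (S `&` [set t | g t \in zs])))).
  exact: m_sadd.
apply: m_mono => u [[Su /= guy]|[Su /= guz]]; split => //=.
  by rewrite in_cons guy eqxx.
by rewrite in_cons guz orbT.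
Qed.

End gen_integral.

Section sup_add.
Local Open Scope ereal_scope.
Context (R : realType).
Lemma sup_add_le (A B : set (\bar R)) (c : \bar R) : c \is a fin_num ->
  A 0 -> B 0 -> (forall a, A a -> 0 <= a) -> (forall b, B b -> 0 <= b) ->
  (forall a b, A a -> B b -> a + b <= c) -> ereal_sup A + ereal_sup B <= c.
Proof.
move=> cf A0 B0 Ag Bg H.
have Ale : forall a, A a -> a <= c by move=> a Aa; rewrite -[a]adde0 H.
have supA0 : 0 <= ereal_sup A by apply: ereal_sup_ubound.
have supAc : ereal_sup A <= c by apply: ge_ereal_sup => a Aa; exact: Ale.
have supAf : ereal_sup A \is a fin_num.
  by rewrite ge0_fin_numE// (le_lt_trans supAc)// ltey_eq cf.
rewrite addeC -lee_suber_addr//.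
apply: ge_ereal_sup => b Bb.
have bf : b \is a fin_num.
  rewrite ge0_fin_numE ?Bg// (@le_lt_trans _ _ c) ?ltey_eq ?cf//.
  by rewrite -[b]add0e H.
rewrite lee_suber_addr// addeC -lee_suber_addr//.
apply: ge_ereal_sup => a Aa; rewrite lee_suber_addr//; exact: H.
Qed.
End sup_add.

Section mu_integral.
Local Open Scope ereal_scope.
Context d (T : measurableType d) (R : realType) (mu : {measure set T -> \bar R}).

Lemma le_integral_gen (f g : T -> \bar R) : (forall x, 0 <= f x) ->
  (forall x, f x <= g x) -> \int[mu]_x f x <= \int[mu]_x g x.
Proof.
move=> f0 fg.
have g0 : forall x, 0 <= g x by move=> x; exact: le_trans (f0 x) (fg x).
rewrite !ge0_integralTE//; apply: ereal_sup_le => _ [h /= hf <-].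
by exists h => //= x; apply: le_trans (hf x) (fg x).
Qed.

Lemma integral_superadd (f g : T -> \bar R) : (forall x, 0 <= f x) ->
  (forall x, 0 <= g x) -> \int[mu]_x (f x + g x) \is a fin_num ->
  \int[mu]_x f x + \int[mu]_x g x <= \int[mu]_x (f x + g x).
Proof.
move=> f0 g0 fin.
have fg0 : forall x, 0 <= f x + g x by move=> x; rewrite adde_ge0.
move: fin; rewrite !ge0_integralTE// => fin.
apply: sup_add_le => //.
- by exists nnsfun0 => //; rewrite sintegral0.
- by exists nnsfun0 => //; rewrite sintegral0.
- by move=> _ [h _ <-]; exact: sintegral_ge0.
- by move=> _ [h _ <-]; exact: sintegral_ge0.
move=> _ _ [h hf <-] [k kg <-]; rewrite -sintegralD.
apply: ereal_sup_ubound; exists (add_nnsfun h k) => //= x.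
by rewrite EFinD; apply: leeD.
Qed.

End mu_integral.

Section prodpow.
Local Open Scope ereal_scope.
Context (R : realType) (disp : measure_display) (X : measurableType disp).
Variable mu : probability X R.

Notation P := (prod_pow mu).

Lemma P_ge0 n A : 0 <= P n A.
Proof.
elim: n A => [|n IH] A /=; first by rewrite lee_fin indicE; case: (_ \in _).
by apply: integral_ge0 => x _.
Qed.

Lemma P_set0 n : P n set0 = 0.
Proof.
elim: n => [|n IH] /=; first by rewrite indicE in_set0.
rewrite (eq_integral (cst 0)) ?integral0//.
Qed.

Lemma P_mono n A B : A `<=` B -> P n A <= P n B.
Proof.
elim: n A B => [|n IH] A B AB /=.
  rewrite lee_fin !indicE; case: (boolP (nil_tuple X \in A)) => [/set_mem/AB|]; last first.
    by case: (_ \in _).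
  by move=> H; rewrite mem_set.
apply: le_integral_gen => x; first exact: P_ge0.
by apply: IH => t /= /AB.
Qed.

Lemma P_le1 n A : P n A <= 1.
Proof.
elim: n A => [|n IH] A /=; first by rewrite lee_fin indicE; case: (_ \in _).
apply: (@le_trans _ _ (\int[mu]_x (cst 1 x))).
  by apply: le_integral_gen => x; [exact: P_ge0| exact: IH].
rewrite integral_cst// mul1e; exact: probability_le1.
Qed.

Lemma P_fin n A : P n A \is a fin_num.
Proof. by rewrite ge0_fin_numE ?P_ge0// (le_lt_trans (P_le1 _ _))// ltry. Qed.

Lemma P_sadd n A B : A `&` B = set0 -> P n A + P n B <= P n (A `|` B).
Proof.
elim: n A B => [|n IH] A B AB /=.
  rewrite -EFinD lee_fin !indicE.
  have [Ax|nAx] := boolP (nil_tuple X \in A); have [Bx|nBx] := boolP (nil_tuple X \in B).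
  - move: AB => /seteqP[H _].
    by case: (H (nil_tuple X) (conj (set_mem Ax) (set_mem Bx))).
  - by rewrite mem_set ?addr0 //; left; exact: set_mem.
  - by rewrite mem_set ?add0r//; right; exact: set_mem.
  - by rewrite addr0; case: (_ \in _).
apply: (@le_trans _ _ (\int[mu]_x (P n [set t | A (cons_tuple x t)] + P n [set t | B (cons_tuple x t)]))).
  apply: integral_superadd; [move=> x; exact: P_ge0|move=> x; exact: P_ge0|].
  rewrite ge0_fin_numE; last by apply: integral_ge0 => x _; rewrite adde_ge0 ?P_ge0.
  have H2 : \int[mu]_x (cst (2%:R)%:E x) < +oo.
    by rewrite integral_cst// (le_lt_trans (lee_wpmul2l _ (probability_le1 mu measurableT)))// mule1 ltry.
  apply: le_lt_trans H2; apply: le_integral_gen => x; first by rewrite adde_ge0 ?P_ge0.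
  by rewrite /= -(@natr1 R 1%N) EFinD leeD ?P_le1.
apply: le_integral_gen => x; first by rewrite adde_ge0 ?P_ge0.
apply: (le_trans (IH _ _ _)).
  apply/seteqP; split => // t [/= At Bt].
  by move: AB => /seteqP[/(_ (cons_tuple x t)) /= H _]; apply: H.
by apply: P_mono => t /=.
Qed.

End prodpow.

Section box.
Local Open Scope ereal_scope.
Context (R : realType) (disp : measure_display) (X : measurableType disp).
Variable mu : probability X R.
Notation P := (prod_pow mu).

Definition box n (B : set X) : set (n.-tuple X) := [set t | forall i, B (tnth t i)].

Lemma box_cons n (B : set X) x (t : n.-tuple X) :
  box n.+1 B (cons_tuple x t) <-> B x /\ box n B t.
Proof.
split.
  move=> H; split; first by have := H ord0; rewrite tnth0.
  by move=> i; have := H (lift ord0 i); rewrite tnthS.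
move=> [Bx Bt] i; case: (unliftP ord0 i) => [j ->|->].
  by rewrite tnthS.
by rewrite tnth0.
Qed.


Lemma P_box n B : measurable B -> P n (box n B) = ((fine (mu B)) ^+ n)%:E.
Proof.
move=> mB; elim: n => [|n IH] /=.
  by rewrite indicE mem_set// => -[].
rewrite (eq_integral (fun x => ((fine (mu B)) ^+ n * \1_B x)%:E)); last first.
  move=> x _; rewrite indicE; case: (boolP (x \in B)) => [/set_mem Bx|/negP nBx].
    rewrite mulr1 -IH; congr (P n _); apply/seteqP; split => t /=.
      by move/box_cons => [].
    by move=> Bt; apply/box_cons.
  rewrite mulr0 [X in P n X](_ : _ = set0) ?P_set0//.
  apply/seteqP; split => t //= /box_cons [Bx _]; apply: nBx; exact: mem_set.
rewrite (@integralZl_indic _ _ _ _ _ measurableT (fun _ => B)) //; last first.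
  move=> h; have : (0 <= fine (mu B) ^+ n)%R by rewrite exprn_ge0// fine_ge0.
  by rewrite leNgt h.
have fB : mu B \is a fin_num.
  by rewrite ge0_fin_numE// (le_lt_trans (probability_le1 mu mB)) ?ltry.
rewrite integral_indic// setIT -[X in _ * X](@fineK _ (mu B)) // -EFinM exprSr //.
Qed.

End box.

Section metric.
Context {R : realType} {disp : measure_display} {X : measurableType disp}.
Variable d : X -> X -> R.
Hypothesis d_metric : is_metric d.
Hypothesis X_findim : finite_dimensional d.
Hypothesis X_borel : forall A : set X, measurable A <-> <<s metric_open d >> A.

Lemma d_ge0 x y : 0 <= d x y. Proof. by case: d_metric. Qed.
Lemma d_xx x : d x x = 0. Proof. by case: d_metric => _ H _ _; apply/H. Qed.
Lemma d_sym x y : d x y = d y x. Proof. by case: d_metric. Qed.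
Lemma d_tri x y z : d x z <= d x y + d y z. Proof. by case: d_metric. Qed.

Lemma oball_open x r : metric_open d (oball d x r).
Proof.
move=> y /= xy; exists (r - d x y); first by rewrite subr_gt0.
move=> z /= yz; apply: (le_lt_trans (d_tri x y z)).
by rewrite -ltrBrDl.
Qed.

Lemma oball_meas x r : measurable (oball d x r).
Proof. by apply/X_borel; apply: sub_gen_smallest; exact: oball_open. Qed.

Lemma cover_list (rho : R) : 0 < rho -> forall l : seq X, exists cs : seq X,
  forall c, c \in l -> forall y, d c y < 2 * rho -> exists2 c', c' \in cs & d c' y < rho.
Proof.
move=> rho0; elim => [|c l [cs IH]]; first by exists [::].
case: X_findim => N HN; case: (HN c rho rho0) => cf Hcf.
exists (map cf (enum 'I_N) ++ cs) => c0; rewrite in_cons => /orP[/eqP->|c0l] y cy.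
  case: (Hcf y cy) => i _ /= iy; exists (cf i) => //.
  by rewrite mem_cat map_f ?mem_enum.
case: (IH c0 c0l y cy) => c' c'cs c'y; exists c' => //.
by rewrite mem_cat c'cs orbT.
Qed.

Lemma cover_iter j : forall x (rho : R), 0 < rho -> exists cs : seq X,
  forall y, d x y < 2 ^+ j * rho -> exists2 c, c \in cs & d c y < rho.
Proof.
elim: j => [|j IH] x rho rho0.
  by exists [:: x] => y; rewrite expr0 mul1r => xy; exists x; rewrite ?mem_seq1.
have rho2 : 0 < 2 * rho by rewrite mulr_gt0.
case: (IH x (2 * rho) rho2) => cs Hcs.
case: (@cover_list rho rho0 cs) => cs' Hcs'.
exists cs' => y xy.
have : d x y < 2 ^+ j * (2 * rho) by rewrite mulrA -exprSr.
by move=> /Hcs [c ccs cy]; exact: (Hcs' c ccs y cy).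
Qed.

Lemma cover_ex (j n : nat) : exists cs : seq X,
  forall y, d point y < 2 ^+ j * n.+1%:R^-1 -> exists2 c, c \in cs & d c y < n.+1%:R^-1.
Proof. by apply: cover_iter; rewrite invr_gt0. Qed.

Definition Qs (j n : nat) : seq X := projT1 (cid (cover_ex j n)).
Definition Qpt (j n i : nat) : X := nth point (Qs j n) i.

Lemma Q_dense x (n : nat) : exists j i, d (Qpt j n i) x < n.+1%:R^-1.
Proof.
set m := Num.trunc (n.+1%:R * d point x).
have H : d point x < 2 ^+ m.+1 * n.+1%:R^-1.
  rewrite mulrC -ltr_pdivrMl ?invr_gt0// invrK.
  apply: (lt_le_trans (truncnS_gt _)).
  rewrite -natrX ler_nat; apply: ltnW; exact: ltn_expl.
exists m.+1.
have := projT2 (cid (cover_ex m.+1 n)) x H.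
move=> [c cQ cx]; exists (index c (Qs m.+1 n)).
by rewrite /Qpt nth_index.
Qed.

Definition Dlt (s : R) : set (X * X) := [set p | d p.1 p.2 < s].

Lemma Dlt_meas s : measurable (Dlt s).
Proof.
suff -> : Dlt s = \bigcup_j \bigcup_n \bigcup_i
    (oball d (Qpt j n i) n.+1%:R^-1 `*` oball d (Qpt j n i) (s - n.+1%:R^-1)).
  apply: bigcupT_measurable => j; apply: bigcupT_measurable => n.
  apply: bigcupT_measurable => i; apply: measurableX; exact: oball_meas.
apply/seteqP; split => [[x y] /= xy|[x y] [j _ [n _ [i _ [/= qx qy]]]]]; last first.
  rewrite /Dlt /=; apply: (le_lt_trans (d_tri x (Qpt j n i) y)).
  by rewrite d_sym -(subrK n.+1%:R^-1 s) addrC ltrD.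
set del := s - d x y.
have del0 : 0 < del by rewrite subr_gt0.
set n := Num.trunc (2 / del).
have Hn : 2 * n.+1%:R^-1 < del.
  have h1 : 2 / del < n.+1%:R := truncnS_gt _.
  rewrite ltr_pdivrMr//; move: h1; rewrite ltr_pdivrMr// => h1.
  by rewrite mulrC.
case: (Q_dense x n) => j [i qx].
exists j => //; exists n => //; exists i => //; split => //=.
apply: (le_lt_trans (d_tri _ x _)).
move: Hn qx; rewrite /del; set rho := n.+1%:R^-1; move=> Hn qx.
lra.
Qed.

End metric.

Section chain.
Context (R : realType) (disp : measure_display) (X : measurableType disp).
Variable d : X -> X -> R.
Hypothesis d_metric : is_metric d.
Hypothesis X_findim : finite_dimensional d.
Hypothesis X_borel : forall A : set X, measurable A <-> <<s metric_open d >> A.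
Variable mu : probability X R.
Notation P := (prod_pow mu).

Definition Tset n (s : R) : set (n.+1.-tuple X) :=
  [set t | forall i : 'I_n.+1, d (tnth t ord0) (tnth t i) < s].

Lemma Tset_meas n s : measurable (Tset n s).
Proof.
suff -> : Tset n s = \bigcap_(i in [set: 'I_n.+1])
    ((fun t => (tnth t ord0, tnth t i)) @^-1` Dlt d s).
  apply: fin_bigcap_measurable; first exact: finite_finset.
  move=> i _; rewrite -[X in measurable X]setTI.
  apply: (measurable_fun_pair (measurable_tnth ord0) (measurable_tnth i)) => //.
  exact: (Dlt_meas _ d_metric X_findim X_borel).
apply/seteqP; split => t /= H i; first by move=> _; exact: H.
exact: (H i I).
Qed.

Lemma P_T n s : 0 < s ->
  P n.+1 (Tset n s) = (\int[mu]_x ((fine (mu (oball d x s))) ^+ n)%:E)%E.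
Proof.
move=> s0 /=; apply: eq_integral => x _.
rewrite -P_box; last exact: (oball_meas _ d_metric X_borel).
congr (P n _); apply/seteqP; split => t /= H.
  by move=> i; have := H (lift ord0 i); rewrite tnthS tnth0.
move=> i; case: (unliftP ord0 i) => [j ->|->].
  by rewrite tnthS tnth0; exact: H.
by rewrite tnth0 (d_xx _ d_metric).
Qed.

Definition Sset k (r : R) : set (k.-tuple X) :=
  [set t | forall j l : 'I_k, (j < l)%N -> d (tnth t j) (tnth t l) < r].

Lemma hS k r (t : k.-tuple X) :
  (\prod_(j < k) \prod_(l < k | (j < l)%N) \1_(oball d (tnth t j) r) (tnth t l) : R) =
  \1_(Sset k r) t.
Proof.
rewrite indicE; case: (boolP (t \in Sset k r)) => [/set_mem St|/negP nSt].
  rewrite big1// => j _; rewrite big1// => l jl.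
  by rewrite indicE mem_set//; exact: St.
have [j [l [jl ndl]]] : exists j l : 'I_k, (j < l)%N /\ ~ d (tnth t j) (tnth t l) < r.
  apply: contra_notP nSt => H; apply: mem_set => j l jl.
  apply: contra_notP H => ndl; exists j, l; split => //.
rewrite (bigD1 j)//= (bigD1 l)//= indicE memNset ?mul0r//.
Qed.

Lemma T_sub_S n r : Tset n.+1 (r / 2) `<=` Sset n.+2 r.
Proof.
move=> t /= H j l _; apply: (le_lt_trans (d_tri _ d_metric _ (tnth t ord0) _)).
rewrite (d_sym _ d_metric (tnth t j)); have := H j; have := H l; lra.
Qed.

Lemma S_sub_T n r : 0 < r -> Sset n.+2 r `<=` Tset n.+1 r.
Proof.
move=> r0 t /= H i; have [->|i0] := eqVneq i ord0; first by rewrite (d_xx _ d_metric).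
by apply: H; rewrite lt0n.
Qed.

Local Open Scope ereal_scope.

Lemma chain_lower n r : (0 < r)%R ->
  corr_integral d mu n.+2 (r / 2) <= chain_integral d mu n.+2 r.
Proof.
move=> r0.
have -> : corr_integral d mu n.+2 (r / 2) = P n.+2 (Tset n.+1 (r / 2)).
  by rewrite P_T ?divr_gt0.
rewrite /chain_integral (@integral_gen _ _ _ _ (@P_set0 _ _ _ mu n.+2)); last first.
  by move=> t; rewrite lee_fin hS indicE; case: (_ \in _).
rewrite -(@sintegral_indic_gen _ _ _ _ (@P_set0 _ _ _ mu n.+2)).
apply: ereal_sup_ubound; exists (indic_nnsfun R (Tset_meas n.+1 (r / 2))) => //= t.
rewrite hS lee_fin measurable_realfun.mindicE !indicE.
case: (boolP (t \in Tset _ _)) => [/set_mem/T_sub_S/mem_set ->//|_].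
by case: (_ \in _).
Qed.

Lemma chain_upper n r : (0 < r)%R ->
  chain_integral d mu n.+2 r <= corr_integral d mu n.+2 r.
Proof.
move=> r0.
have -> : corr_integral d mu n.+2 r = P n.+2 (Tset n.+1 r) by rewrite P_T.
rewrite /chain_integral (@integral_gen _ _ _ _ (@P_set0 _ _ _ mu n.+2)); last first.
  by move=> t; rewrite lee_fin hS indicE; case: (_ \in _).
apply: ge_ereal_sup => _ [g /= gh <-].
apply: (@le_trans _ _ (P n.+2 (Sset n.+2 r))); last exact: (@P_mono _ _ _ mu n.+2 _ _ (@S_sub_T n r r0)).
apply: (@sintegral_le_gen _ _ _ _ (@P_set0 _ _ _ mu n.+2) (@P_ge0 _ _ _ mu n.+2) (@P_mono _ _ _ mu n.+2) (@P_sadd _ _ _ mu n.+2)).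
by move=> t; have := gh t; rewrite hS lee_fin.
Qed.

End chain.

Section pos.
Context (R : realType) (disp : measure_display) (X : measurableType disp).
Variable d : X -> X -> R.
Hypothesis d_metric : is_metric d.
Hypothesis X_findim : finite_dimensional d.
Hypothesis X_borel : forall A : set X, measurable A <-> <<s metric_open d >> A.
Variable mu : probability X R.

Local Open Scope ereal_scope.

Lemma mu_pos_ball (n0 : nat) : exists j i,
  0 < mu (oball d (Qpt d X_findim j n0 i) n0.+1%:R^-1).
Proof.
apply: contrapT => H.
have H0 : forall j i, mu (oball d (Qpt d X_findim j n0 i) n0.+1%:R^-1) = 0.
  move=> j i; apply/eqP; rewrite eq_le measure_ge0 andbT leNgt; apply/negP => h.
  by apply: H; exists j, i.
set F := fun j => \bigcup_i oball d (Qpt d X_findim j n0 i) n0.+1%:R^-1.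
have mF : forall j, measurable (F j).
  by move=> j; apply: bigcupT_measurable => i; exact: (oball_meas _ d_metric X_borel).
have F0 : forall j, mu (F j) = 0.
  move=> j; apply/eqP; rewrite eq_le measure_ge0 andbT.
  have := @measure_sigma_subadditive _ _ _ mu (F j)
    (fun i => oball d (Qpt d X_findim j n0 i) n0.+1%:R^-1)
    (fun i => oball_meas _ d_metric X_borel _ _) (mF j) (@subset_refl _ _).
  move=> h; apply: (le_trans h); rewrite eseries0 // => i _ _; exact: H0.
have : mu setT <= \sum_(0 <= j <oo) mu (F j).
  apply: (@measure_sigma_subadditive _ _ _ mu setT F mF measurableT) => x _.
  case: (Q_dense d X_findim x n0) => j [i Hji]; exists j => //; exists i => //.
by rewrite probability_setT eseries0 ?lee_fin ?ler10// => j _ _; exact: F0.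
Qed.

Lemma corr_pos k (s : R) : (0 < s)%R -> 0 < corr_integral d mu k s.
Proof.
move=> s0; set n0 := Num.trunc (2 / s).
have rho_le : (n0.+1%:R^-1 <= s / 2)%R.
  have h1 : (2 / s < n0.+1%:R)%R := truncnS_gt _.
  move: h1; rewrite ltr_pdivrMr// => h1.
  rewrite ler_pdivlMr// mulrC ler_pdivrMr//.
  by rewrite mulrC ltW.
case: (mu_pos_ball n0) => j [i muE].
set q := Qpt d X_findim j n0 i; set E := oball d q n0.+1%:R^-1.
have mE : measurable E by exact: (oball_meas _ d_metric X_borel).
have fE : mu E \is a fin_num.
  by rewrite ge0_fin_numE// (le_lt_trans (probability_le1 mu mE)) ?ltry.
set c := fine (mu E).
have c0 : (0 < c)%R by rewrite fine_gt0// muE /= ltey_eq fE.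
apply: (@lt_le_trans _ _ (\int[mu]_x ((c ^+ k.-1) * \1_E x)%:E)).
  rewrite (@integralZl_indic _ _ _ _ _ measurableT (fun _ => E)) //; last first.
    move=> h; have : (0 < c ^+ k.-1)%R by rewrite exprn_gt0.
    by rewrite ltNge (ltW h).
  by rewrite integral_indic// setIT mule_gt0// lte_fin exprn_gt0.
apply: le_integral_gen => x.
  rewrite lee_fin; apply: mulr_ge0; [exact: exprn_ge0 (ltW c0)|by rewrite indicE; case: (_ \in _)].
rewrite lee_fin indicE; case: (boolP (x \in E)) => [/set_mem Ex|_]; last first.
  by rewrite mulr0 exprn_ge0// fine_ge0.
rewrite mulr1 lerXn2r ?nnegrE ?fine_ge0 ?(ltW c0)//.
have mB : measurable (oball d x s) by exact: (oball_meas _ d_metric X_borel).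
apply: fine_le => //.
  by rewrite ge0_fin_numE// (le_lt_trans (probability_le1 mu mB)) ?ltry.
apply: le_measure; rewrite ?inE//.
move=> y /= Ey; apply: (le_lt_trans (d_tri _ d_metric _ q _)).
rewrite (d_sym _ d_metric x q); move: Ex Ey rho_le; rewrite /E /oball /=; set rho := (n0.+1%:R^-1)%R; move=> h1 h2 h3; have h4 : (s / 2 + s / 2 = s)%R by rewrite -splitr. lra.
Qed.

End pos.

Section le_mul.
Local Open Scope ereal_scope.
Context (R : realType).
Lemma le_mul_lim (x y : \bar R) :
  (forall eta : R, (0 < eta)%R -> x <= (1 + eta)%:E * y) -> x <= y.
Proof.
move=> H; case: y H => [b| |] H; last 2 first.
- by rewrite leey.
- have := H 1%R ltr01; rewrite mulrNy gtr0_sg ?mul1e ?addr_gt0//.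
case: x H => [a| |] H; last 2 first.
- by have := H 1%R ltr01; rewrite -EFinM leye_eq.
- by rewrite leNye.
rewrite lee_fin; have [b0|bpos] := ltP b 0%R.
  have := H 1%R ltr01; rewrite -EFinM lee_fin => h; nra.
apply/ler_addgt0Pr => e e0.
have h := H (e / (b + 1))%R; rewrite -EFinM lee_fin in h.
have b1 : (0 < b + 1)%R by rewrite ltr_pwDr.
have := h (divr_gt0 e0 b1).
have -> : ((1 + e / (b + 1)) * b = b + e * (b / (b + 1)))%R.
  by rewrite mulrDl mul1r mulrAC mulrA.
move=> hab; apply: (le_trans hab); rewrite lerD2l ler_piMr ?ltW//.
by rewrite ltr_pdivrMr// mul1r ltrDl.
Qed.
End le_mul.

Section final.
Context (R : realType) (disp : measure_display) (X : measurableType disp).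
Variable d : X -> X -> R.
Hypothesis d_metric : is_metric d.
Hypothesis X_findim : finite_dimensional d.
Hypothesis X_borel : forall A : set X, measurable A <-> <<s metric_open d >> A.
Variable mu : probability X R.
Variable n : nat.

Local Notation corr := (corr_integral d mu n.+2).
Local Notation chain := (chain_integral d mu n.+2).

Lemma corr_le1 r : (0 < r)%R -> (corr r <= 1)%E.
Proof.
move=> r0; have -> : corr r = prod_pow mu n.+2 (Tset _ _ _ d n.+1 r).
  by rewrite (P_T _ _ _ _ d_metric X_borel).
exact: P_le1.
Qed.

Lemma fin_of (x : \bar R) : (0 <= x)%E -> (x <= 1)%E -> x \is a fin_num.
Proof. by move=> x0 x1; rewrite ge0_fin_numE// (le_lt_trans x1) ?ltry. Qed.

Lemma real_bounds r : (0 < r)%R ->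
  [/\ 0 < fine (corr (r / 2)), fine (corr (r / 2)) <= fine (chain r),
      fine (chain r) <= fine (corr r) & fine (corr r) <= 1].
Proof.
move=> r0.
have c2 := corr_pos _ _ _ _ d_metric X_findim X_borel mu n.+2 _ (divr_gt0 r0 (ltr0Sn _ 1)).
have l := chain_lower _ _ _ _ d_metric X_findim X_borel mu n _ r0.
have u := chain_upper _ _ _ _ d_metric X_borel mu n _ r0.
have c1 := corr_le1 _ r0.
have c1' := corr_le1 _ (divr_gt0 r0 (ltr0Sn _ 1)).
have f1 : corr (r / 2) \is a fin_num := fin_of _ (ltW c2) c1'.
have f2 : chain r \is a fin_num := fin_of _ (le_trans (ltW c2) l) (le_trans u c1).
have f3 : corr r \is a fin_num := fin_of _ (le_trans (ltW c2) (le_trans l u)) c1.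
split.
- by rewrite fine_gt0// c2 /= ltey_eq f1.
- exact: fine_le.
- exact: fine_le.
- by rewrite -lee_fin fineK.
Qed.

Definition ea (r : R) : \bar R := ((ln (fine (corr r)) / ln r)%R)%:E.

Lemma ea_Dk r : ((n.+1)%:R%:E * Dk_ratio d mu n.+2 r)%E = ea r.
Proof.
rewrite /Dk_ratio /ea -EFinM /=; congr EFin.
have N0 : (n.+1%:R : R) != 0 by rewrite pnatr_eq0.
by rewrite invfM mulrCA [X in _ * X]mulrA mulfV ?mul1r.
Qed.

Lemma lower_ineq r : (0 < r < 1)%R -> (ea r <= chain_ratio d mu n.+2 r)%E.
Proof.
move=> /andP[r0 r1]; case: (real_bounds _ r0) => b1 b2 b3 b4.
rewrite /ea /chain_ratio lee_fin; apply: ler_wnM2r.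
  by rewrite invr_le0 ltW// ln_lt0// r0.
have gp := lt_le_trans b1 b2; have cp := lt_le_trans gp b3.
by rewrite ler_ln ?posrE.
Qed.

Lemma upper_ineq (eta r : R) : (0 < eta)%R -> (0 < r < 1)%R ->
  (r < expR (- ln 2 / eta))%R ->
  (chain_ratio d mu n.+2 r <= (1 + eta)%:E * ea (r / 2))%E.
Proof.
move=> e0 /andP[r0 r1] rexp; case: (real_bounds _ r0) => b1 b2 b3 b4.
rewrite /ea /chain_ratio -EFinM lee_fin.
have L0 : (ln r < 0)%R by rewrite ln_lt0// r0.
have Lr : (ln r < - ln 2 / eta)%R.
  by rewrite -[X in (_ < X)%R]expRK ltr_ln ?posrE ?expR_gt0.
have ln2 : (0 < ln (2 : R))%R by rewrite ln_gt0// ltr1n.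
have Lh : ln (r / 2) = (ln r - ln 2)%R by rewrite ln_div ?posrE.
have lg : (ln (fine (corr (r / 2))) <= ln (fine (chain r)))%R.
  have gp := lt_le_trans b1 b2; by rewrite ler_ln ?posrE.
have lc : (ln (fine (corr (r / 2))) <= 0)%R.
  by rewrite ln_le0// (le_trans b2) ?(le_trans b3).
rewrite Lh.
set u := ln (fine (corr (r / 2))); set g := ln (fine (chain r)).
set L := ln r; set l2 := ln (2 : R).
have hL : (eta * (- L) > l2)%R.
  move: Lr; rewrite ltr_pdivlMr// => h; rewrite mulrN mulrC ltrNr; exact: h.
apply: (@le_trans _ _ (u / L)%R).
  by apply: ler_wnM2r => //; rewrite invr_le0 ltW.
set p := (u / L)%R; set q := (u / (L - l2))%R.
have hp : (p * L = u)%R by rewrite /p divfK ?lt_eqF.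
have hq : (q * (L - l2) = u)%R by rewrite /q divfK// lt_eqF// subr_lt0 (lt_trans L0).
have q0 : (0 <= q)%R.
  by rewrite /q mulr_le0// invr_le0 ltW// subr_lt0 (lt_trans L0).
have e1 : (0 <= q * (- l2 - eta * L))%R.
  rewrite mulr_ge0// subr_ge0; move: hL; rewrite mulrN ltrNr => h; exact: ltW.
rewrite -(ler_nM2r L0) hp -hq.
rewrite -/L; clearbody p q L l2 u; nra.
Qed.

Local Open Scope ereal_scope.

Lemma final_einf : (n.+1)%:R%:E * limf_einf (Dk_ratio d mu n.+2) (0%R)^'+ =
  limf_einf (chain_ratio d mu n.+2) (0%R)^'+.
Proof.
rewrite -limf_einfZ ?ltr0Sn//.
have -> : (fun r : R => (n.+1%:R)%:E * Dk_ratio d mu n.+2 r) = ea.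
  by apply/funext => r; exact: ea_Dk.
apply/eqP; rewrite eq_le; apply/andP; split.
  apply: limf_einf_le; exists 1%R => // r; exact: lower_ineq.
apply: le_mul_lim => eta eta0.
apply: (@le_trans _ _ (limf_einf (fun r : R => (1 + eta)%:E * ea (r / 2)) (0%R)^'+)).
  apply: limf_einf_le; exists (Num.min 1 (expR (- ln 2 / eta)))%R.
    by rewrite lt_min ltr01 expR_gt0.
  move=> r /andP[r0]; rewrite lt_min => /andP[r1 re]; apply: upper_ineq => //.
  by rewrite r0.
rewrite (@limf_einfZ R (1 + eta)%R (fun r : R => ea (r / 2))) ?addr_gt0//.
apply: lee_wpmul2l; first by rewrite lee_fin addr_ge0 ?ltW.
exact: limf_einf_half.
Qed.

Lemma final_esup : (n.+1)%:R%:E * limf_esup (Dk_ratio d mu n.+2) (0%R)^'+ =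
  limf_esup (chain_ratio d mu n.+2) (0%R)^'+.
Proof.
rewrite -limf_esupZ ?ltr0Sn//.
have -> : (fun r : R => (n.+1%:R)%:E * Dk_ratio d mu n.+2 r) = ea.
  by apply/funext => r; exact: ea_Dk.
apply/eqP; rewrite eq_le; apply/andP; split.
  apply: limf_esup_le; exists 1%R => // r; exact: lower_ineq.
apply: le_mul_lim => eta eta0.
apply: (@le_trans _ _ (limf_esup (fun r : R => (1 + eta)%:E * ea (r / 2)) (0%R)^'+)).
  apply: limf_esup_le; exists (Num.min 1 (expR (- ln 2 / eta)))%R.
    by rewrite lt_min ltr01 expR_gt0.
  move=> r /andP[r0]; rewrite lt_min => /andP[r1 re]; apply: upper_ineq => //.
  by rewrite r0.
rewrite (@limf_esupZ R (1 + eta)%R (fun r : R => ea (r / 2))) ?addr_gt0//.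
apply: lee_wpmul2l; first by rewrite lee_fin addr_ge0 ?ltW.
exact: limf_esup_half.
Qed.

End final.


Theorem mainTheorem10 (R : realType) (disp : measure_display)
  (X : measurableType disp) (d : X -> X -> R)
  (d_metric : is_metric d) (X_findim : finite_dimensional d)
  (X_borel : forall A : set X, measurable A <-> <<s metric_open d >> A)
  (mu : probability X R) (k : nat) (hk : (2 <= k)%N) :
  ((k.-1)%:R%:E * lower_Dk d mu k = limf_einf (chain_ratio d mu k) (0%R)^'+)%E /\
  ((k.-1)%:R%:E * upper_Dk d mu k = limf_esup (chain_ratio d mu k) (0%R)^'+)%E.
Proof.
case: k hk => [|[|n]] // hk.
split.
- exact: (final_einf _ _ _ _ d_metric X_findim X_borel mu n).
- exact: (final_esup _ _ _ _ d_metric X_findim X_borel mu n).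
Qed.
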